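(* Let $a,b\in[0,1]$ with $a+b>1$, $\bar a=1-a$, $\bar b=1-b$, $\gamma=2^{\frac{H(b)-H(a)}{a+b-1}}$, $K=\frac{1}{(a+b-1)(\gamma+1)}$. Define functions $P_0,P_1$ on $\{0,1\}^n$, $n\ge0$, by $P_0(\emptyset)=P_1(\emptyset)=1$ and for $u\in\{0,1\}^{n-1}$: $P_0(0,u)=K(b\gamma P_0(u)-\bar bP_1(u))$, $P_0(1,u)=K(-\bar a\gamma P_0(u)+aP_1(u))$, $P_1(0,u)=K(aP_0(u)-\bar a\gamma P_1(u))$, $P_1(1,u)=K(-\bar bP_0(u)+b\gamma P_1(u))$. Define the sets $\mathcal L_0,\dots,\mathcal L_6$ of real numbers $\beta$: $\mathcal L_1=\{\max(\frac{\bar a}{\bar b}\gamma,\frac{\gamma(\bar a+b)-\sqrt{\gamma^2(\bar a+b)^2-4a\bar b}}{2\bar b})\le\beta\le\frac{\gamma(\bar a+b)+\sqrt{\gamma^2(\bar a+b)^2-4a\bar b}}{2\bar b}\}$, $\mathcal L_2=\{\frac{(a+\bar b)+\sqrt{(a+\bar b)^2-4\bar ab\gamma^2}}{2b\gamma}\le\beta\le\frac{\bar a}{\bar b}\gamma\}$, $\mathcal L_3=\{\beta\le\min(\frac{\bar a}{\bar b}\gamma,\frac{(a+\bar b)-\sqrt{(a+\bar b)^2-4\bar ab\gamma^2}}{2b\gamma})\}$, $\mathcal L_4=\{\beta\le\min(\frac{b\gamma}{a},\frac{\gamma(\bar a+b)-\sqrt{\gamma^2(\bar a+b)^2-4a\bar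 b}}{2a})\}$, $\mathcal L_5=\{\frac{\gamma(\bar a+b)+\sqrt{\gamma^2(\bar a+b)^2-4a\bar b}}{2a}\le\beta\le\frac{b\gamma}{a}\}$, $\mathcal L_6=\{\max(\frac{b\gamma}{a},\frac{(a+\bar b)-\sqrt{(a+\bar b)^2-4\bar ab\gamma^2}}{2\bar a\gamma})\le\beta\le\frac{(a+\bar b)+\sqrt{(a+\bar b)^2-4\bar ab\gamma^2}}{2\bar a\gamma}\}$, $\mathcal L_0=\{1\le\beta\le\min(\frac{a}{\bar a\gamma},\frac{b\gamma}{\bar b})\}$. If $(\mathcal L_1\cup\mathcal L_2\cup\mathcal L_3)\cap(\mathcal L_4\cup\mathcal L_5\cup\mathcal L_6)\cap\mathcal L_0\ne\emptyset$, then there exists $\beta$ with $1\le\beta\le\min\{\frac{a}{\bar a\gamma},\frac{b\gamma}{\bar b}\}$ such that for every $n\ge1$: if $\beta P_1(u)\ge P_0(u)$ and $\beta P_0(u)\ge P_1(u)$ for all $u\in\{0,1\}^{n-1}$, then $\beta P_1(x)\ge P_0(x)$ and $\beta P_0(x)\ge P_1(x)$ for all $x\in\{0,1\}^n$.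
   Context: $H(p)=-p\log_2p-(1-p)\log_2(1-p)$ is the binary entropy; $(0,u)$ denotes $0$ followed by the sequence $u$. *)

(* Defs.v *)
From Stdlib Require Import Reals Lra List.
Open Scope R_scope.

Definition log2 (x : R) : R := ln x / ln 2.

(* binary entropy; at p = 0 or 1 the terms p*log2 p vanish (0 * _ = 0) *)
Definition H (p : R) : R := - p * log2 p - (1 - p) * log2 (1 - p).

Definition gam (a b : R) : R := Rpower 2 ((H b - H a) / (a + b - 1)).
Definition Kc (a b : R) : R := 1 / ((a + b - 1) * (gam a b + 1)).

(* (P_0 u, P_1 u) for u : list bool, with (x :: u) meaning (x,u) *)
Fixpoint P01 (a b : R) (u : list bool) : R * R :=
  match u with
  | nil => (1, 1)
  | x :: u' =>
      let p0 := fst (P01 a b u') in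
      let p1 := snd (P01 a b u') in
      let g := gam a b in let K := Kc a b in
      if x then
        (K * (- (1 - a) * g * p0 + a * p1), K * (- (1 - b) * p0 + b * g * p1))
      else
        (K * (b * g * p0 - (1 - b) * p1), K * (a * p0 - (1 - a) * g * p1))
  end.

Definition P0 a b u := fst (P01 a b u).
Definition P1 a b u := snd (P01 a b u).

Definition D1 a b := (gam a b)^2 * ((1 - a) + b)^2 - 4 * a * (1 - b).
Definition D2 a b := (a + (1 - b))^2 - 4 * (1 - a) * b * (gam a b)^2.

(* sets L_i; a set whose defining bounds involve the square root of a
   negative number is taken to be empty (guard 0 <= D) *)
Definition L1 a b (be : R) : Prop := let g := gam a b in
  0 <= D1 a b /\
  Rmax ((1 - a) / (1 - b) * g) ((g * ((1 - a) + b) - sqrt (D1 a b)) / (2 * (1 - b))) <= be /\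
  be <= (g * ((1 - a) + b) + sqrt (D1 a b)) / (2 * (1 - b)).
Definition L2 a b (be : R) : Prop := let g := gam a b in
  0 <= D2 a b /\
  ((a + (1 - b)) + sqrt (D2 a b)) / (2 * b * g) <= be /\
  be <= (1 - a) / (1 - b) * g.
Definition L3 a b (be : R) : Prop := let g := gam a b in
  0 <= D2 a b /\
  be <= Rmin ((1 - a) / (1 - b) * g) (((a + (1 - b)) - sqrt (D2 a b)) / (2 * b * g)).
Definition L4 a b (be : R) : Prop := let g := gam a b in
  0 <= D1 a b /\
  be <= Rmin (b * g / a) ((g * ((1 - a) + b) - sqrt (D1 a b)) / (2 * a)).
Definition L5 a b (be : R) : Prop := let g := gam a b in
  0 <= D1 a b /\
  (g * ((1 - a) + b) + sqrt (D1 a b)) / (2 * a) <= be /\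
  be <= b * g / a.
Definition L6 a b (be : R) : Prop := let g := gam a b in
  0 <= D2 a b /\
  Rmax (b * g / a) (((a + (1 - b)) - sqrt (D2 a b)) / (2 * (1 - a) * g)) <= be /\
  be <= ((a + (1 - b)) + sqrt (D2 a b)) / (2 * (1 - a) * g).
Definition L0 a b (be : R) : Prop := let g := gam a b in
  1 <= be /\ be <= Rmin (a / ((1 - a) * g)) (b * g / (1 - b)).

Definition good a b (be : R) (n : nat) : Prop :=
  forall u : list bool, length u = n ->
    be * P1 a b u >= P0 a b u /\ be * P0 a b u >= P1 a b u.

(* Main.v *)
Require Import Defs.
From Stdlib Require Import Reals Lra Psatz List.
Open Scope R_scope.

Lemma qfac al B C s r1 r2 x : al <> 0 -> s*s = B*B - 4*al*C ->
  2*al*r1 = B - s -> 2*al*r2 = B + s ->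
  al*x*x - B*x + C = al*(x-r1)*(x-r2).
Proof.
  intros h hs h1 h2.
  assert (r1 = (B-s)/(2*al)) by (rewrite <- h1; field; auto).
  assert (r2 = (B+s)/(2*al)) by (rewrite <- h2; field; auto).
  subst. assert (C = (B*B - s*s)/(4*al)) by (rewrite hs; field; auto).
  rewrite H. field; auto.
Qed.

Lemma qhi al B C s r1 r2 x : 0 < al -> 0 <= s -> s*s = B*B - 4*al*C ->
  2*al*r1 = B - s -> 2*al*r2 = B + s -> r2 <= x -> 0 <= al*x*x - B*x + C.
Proof.
  intros h hs0 hs h1 h2 hx. rewrite (qfac al B C s r1 r2 x); try lra.
  assert (r1 <= r2) by nra.
  apply Rmult_le_pos; [apply Rmult_le_pos|]; lra.
Qed.

Lemma qlo al B C s r1 r2 x : 0 < al -> 0 <= s -> s*s = B*B - 4*al*C ->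
  2*al*r1 = B - s -> 2*al*r2 = B + s -> x <= r1 -> 0 <= al*x*x - B*x + C.
Proof.
  intros h hs0 hs h1 h2 hx. rewrite (qfac al B C s r1 r2 x); try lra.
  assert (r1 <= r2) by nra.
  assert (0 <= al*(r1-x)) by (apply Rmult_le_pos; lra). nra.
Qed.

Lemma qin al B C s r1 r2 x : 0 < al -> 0 <= s -> s*s = B*B - 4*al*C ->
  2*al*r1 = B - s -> 2*al*r2 = B + s -> r1 <= x -> x <= r2 -> al*x*x - B*x + C <= 0.
Proof.
  intros h hs0 hs h1 h2 hx hx2. rewrite (qfac al B C s r1 r2 x); try lra.
  assert (0 <= al*(x-r1)) by (apply Rmult_le_pos; lra).
  assert (0 <= al*(x-r1)*(r2-x)) by (apply Rmult_le_pos; lra).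
  replace (al*(x-r1)*(x-r2)) with (-(al*(x-r1)*(r2-x))) by ring. lra.
Qed.

Lemma cone c0 c1 be p0 p1 : 1 <= be -> be*p1 >= p0 -> be*p0 >= p1 ->
  0 <= c0 + c1*be -> 0 <= c0*be + c1 -> (be = 1 -> c0 + c1 <= 0) ->
  0 <= c0*p0 + c1*p1.
Proof.
  intros hb h1 h2 hX hY h3.
  destruct (Req_dec be 1) as [e|ne].
  - subst be. assert (p0 = p1) by lra. subst p0. specialize (h3 eq_refl).
    replace (c0*p1+c1*p1) with ((c0+c1)*p1) by ring.
    replace (c0+c1) with 0 by lra. lra.
  - assert (hid : (be*be-1)*(c0*p0+c1*p1) = (be*p1-p0)*(c0+c1*be) + (be*p0-p1)*(c0*be+c1)) by ring.
    assert (0 <= (be*p1-p0)*(c0+c1*be)) by (apply Rmult_le_pos; lra).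
    assert (0 <= (be*p0-p1)*(c0*be+c1)) by (apply Rmult_le_pos; lra).
    assert (0 < be*be-1) by nra. nra.
Qed.

Lemma gam_pos a b : 0 < gam a b.
Proof. unfold gam, Rpower. apply exp_pos. Qed.

Lemma sq D : 0 <= D -> sqrt D * sqrt D = D.
Proof. intro; apply sqrt_sqrt; auto. Qed.

Lemma keyc a b be g : 0 < a -> 0 < b -> a < 1 -> b < 1 -> g = gam a b -> 1 <= be ->
  (L1 a b be \/ L2 a b be \/ L3 a b be) ->
  0 <= (be*b*g - a) + ((1-a)*g - be*(1-b))*be /\ 0 <= (be*b*g - a)*be + ((1-a)*g - be*(1-b)).
Proof.
  intros ha hb ha1 hb1 eg hbe H.
  assert (hg : 0 < g) by (subst; apply gam_pos).
  assert (ht : (1-a)/(1-b)*g * (1-b) = (1-a)*g) by (field; lra).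
  unfold L1, L2, L3 in H; rewrite <- eg in H.
  destruct H as [[hD [hm hM]]|[[hD [hm hM]]|[hD hM]]].
  - pose proof (Rle_trans _ _ _ (Rmax_l _ _) hm) as h1.
    pose proof (Rle_trans _ _ _ (Rmax_r _ _) hm) as h2.
    pose proof (sqrt_pos (D1 a b)) as hs.
    assert (q := qin (1-b) (g*((1-a)+b)) a (sqrt (D1 a b))
      ((g * ((1 - a) + b) - sqrt (D1 a b)) / (2 * (1 - b))) ((g * ((1 - a) + b) + sqrt (D1 a b)) / (2 * (1 - b))) be ltac:(lra) hs
      ltac:(rewrite sq; [unfold D1; subst; ring| auto])
      ltac:(field; lra) ltac:(field; lra) h2 hM).
    assert ((1-a)/(1-b)*g*(1-b) <= be*(1-b)) by (apply Rmult_le_compat_r; lra).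
    assert (c1n : (1-a)*g - be*(1-b) <= 0) by lra.
    assert (hX : 0 <= (be*b*g - a) + ((1-a)*g - be*(1-b))*be).
    { replace ((be*b*g - a) + ((1-a)*g - be*(1-b))*be) with
        (-((1-b)*be*be - g*((1-a)+b)*be + a)) by ring. lra. }
    split; auto.
    assert (0 <= be * ((be*b*g - a) + ((1-a)*g - be*(1-b))*be)) by (apply Rmult_le_pos; lra).
    assert (0 <= -((1-a)*g - be*(1-b))*(be*be-1)) by (apply Rmult_le_pos; nra).
    nra.
  - pose proof (sqrt_pos (D2 a b)) as hs.
    assert (q := qhi (b*g) (a+(1-b)) ((1-a)*g) (sqrt (D2 a b))
      (((a + (1 - b)) - sqrt (D2 a b)) / (2 * b * g)) (((a + (1 - b)) + sqrt (D2 a b)) / (2 * b * g)) be ltac:(nra) hs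
      ltac:(rewrite sq; [unfold D2; subst; ring| auto])
      ltac:(field; lra) ltac:(field; lra) hm).
    assert (be*(1-b) <= (1-a)/(1-b)*g*(1-b)) by (apply Rmult_le_compat_r; lra).
    assert (c1p : 0 <= (1-a)*g - be*(1-b)) by lra.
    assert (hY : 0 <= (be*b*g - a)*be + ((1-a)*g - be*(1-b))).
    { replace ((be*b*g - a)*be + ((1-a)*g - be*(1-b))) with
        (b*g*be*be - (a+(1-b))*be + (1-a)*g) by ring. lra. }
    split; auto.
    assert (0 <= ((1-a)*g - be*(1-b))*(be*be-1)) by (apply Rmult_le_pos; nra).
    assert (hbX : 0 <= be * ((be*b*g - a) + ((1-a)*g - be*(1-b))*be)) by nra.
    destruct (Rle_or_lt 0 ((be*b*g - a) + ((1-a)*g - be*(1-b))*be)); auto.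
    assert (be * ((be*b*g - a) + ((1-a)*g - be*(1-b))*be) < 0) by (apply Rmult_pos_neg; lra). lra.
  - pose proof (Rle_trans _ _ _ hM (Rmin_l _ _)) as h1.
    pose proof (Rle_trans _ _ _ hM (Rmin_r _ _)) as h2.
    pose proof (sqrt_pos (D2 a b)) as hs.
    assert (q := qlo (b*g) (a+(1-b)) ((1-a)*g) (sqrt (D2 a b))
      (((a + (1 - b)) - sqrt (D2 a b)) / (2 * b * g)) (((a + (1 - b)) + sqrt (D2 a b)) / (2 * b * g)) be ltac:(nra) hs
      ltac:(rewrite sq; [unfold D2; subst; ring| auto])
      ltac:(field; lra) ltac:(field; lra) h2).
    assert (be*(1-b) <= (1-a)/(1-b)*g*(1-b)) by (apply Rmult_le_compat_r; lra).
    assert (c1p : 0 <= (1-a)*g - be*(1-b)) by lra.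
    assert (hY : 0 <= (be*b*g - a)*be + ((1-a)*g - be*(1-b))).
    { replace ((be*b*g - a)*be + ((1-a)*g - be*(1-b))) with
        (b*g*be*be - (a+(1-b))*be + (1-a)*g) by ring. lra. }
    split; auto.
    assert (0 <= ((1-a)*g - be*(1-b))*(be*be-1)) by (apply Rmult_le_pos; nra).
    assert (hbX : 0 <= be * ((be*b*g - a) + ((1-a)*g - be*(1-b))*be)) by nra.
    destruct (Rle_or_lt 0 ((be*b*g - a) + ((1-a)*g - be*(1-b))*be)); auto.
    assert (be * ((be*b*g - a) + ((1-a)*g - be*(1-b))*be) < 0) by (apply Rmult_pos_neg; lra). lra.
Qed.

Lemma keyd a b be g : 0 < a -> 0 < b -> a < 1 -> b < 1 -> g = gam a b -> 1 <= be ->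
  (L4 a b be \/ L5 a b be \/ L6 a b be) ->
  0 <= (be*a - b*g) + ((1-b) - be*(1-a)*g)*be /\ 0 <= (be*a - b*g)*be + ((1-b) - be*(1-a)*g).
Proof.
  intros ha hb ha1 hb1 eg hbe hL.
  assert (hg : 0 < g) by (subst; apply gam_pos).
  assert (ht : b*g/a * a = b*g) by (field; lra).
  unfold L4, L5, L6 in hL; rewrite <- eg in hL.
  assert (fin : 0 <= (be*a - b*g)*be + ((1-b) - be*(1-a)*g) -> be*a - b*g <= 0 ->
     0 <= (be*a - b*g) + ((1-b) - be*(1-a)*g)*be /\ 0 <= (be*a - b*g)*be + ((1-b) - be*(1-a)*g)).
  { intros hY hd. split; auto.
    assert (0 <= -(be*a - b*g)*(be*be-1)) by (apply Rmult_le_pos; nra).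
    assert (0 <= be*((be*a - b*g)*be + ((1-b) - be*(1-a)*g))) by (apply Rmult_le_pos; lra).
    nra. }
  destruct hL as [[hD hM]|[[hD [hm hM]]|[hD [hm hM]]]].
  - pose proof (Rle_trans _ _ _ hM (Rmin_l _ _)) as h1.
    pose proof (Rle_trans _ _ _ hM (Rmin_r _ _)) as h2.
    pose proof (sqrt_pos (D1 a b)) as hs.
    assert (q := qlo a (g*((1-a)+b)) (1-b) (sqrt (D1 a b))
      ((g * ((1 - a) + b) - sqrt (D1 a b)) / (2 * a)) ((g * ((1 - a) + b) + sqrt (D1 a b)) / (2 * a)) be ltac:(lra) hs
      ltac:(rewrite sq; [unfold D1; subst; ring| auto])
      ltac:(field; lra) ltac:(field; lra) h2).
    assert (be*a <= b*g/a*a) by (apply Rmult_le_compat_r; lra).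
    apply fin; [|lra].
    replace ((be*a - b*g)*be + ((1-b) - be*(1-a)*g)) with
        (a*be*be - g*((1-a)+b)*be + (1-b)) by ring. lra.
  - pose proof (sqrt_pos (D1 a b)) as hs.
    assert (q := qhi a (g*((1-a)+b)) (1-b) (sqrt (D1 a b))
      ((g * ((1 - a) + b) - sqrt (D1 a b)) / (2 * a)) ((g * ((1 - a) + b) + sqrt (D1 a b)) / (2 * a)) be ltac:(lra) hs
      ltac:(rewrite sq; [unfold D1; subst; ring| auto])
      ltac:(field; lra) ltac:(field; lra) hm).
    assert (be*a <= b*g/a*a) by (apply Rmult_le_compat_r; lra).
    apply fin; [|lra].
    replace ((be*a - b*g)*be + ((1-b) - be*(1-a)*g)) with
        (a*be*be - g*((1-a)+b)*be + (1-b)) by ring. lra.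
  - pose proof (Rle_trans _ _ _ (Rmax_l _ _) hm) as h1.
    pose proof (Rle_trans _ _ _ (Rmax_r _ _) hm) as h2.
    pose proof (sqrt_pos (D2 a b)) as hs.
    assert (q := qin ((1-a)*g) (a+(1-b)) (b*g) (sqrt (D2 a b))
      (((a + (1 - b)) - sqrt (D2 a b)) / (2 * (1 - a) * g)) (((a + (1 - b)) + sqrt (D2 a b)) / (2 * (1 - a) * g)) be ltac:(nra) hs
      ltac:(rewrite sq; [unfold D2; subst; ring| auto])
      ltac:(field; lra) ltac:(field; lra) h2 hM).
    assert (b*g/a*a <= be*a) by (apply Rmult_le_compat_r; lra).
    assert (hX : 0 <= (be*a - b*g) + ((1-b) - be*(1-a)*g)*be).
    { replace ((be*a - b*g) + ((1-b) - be*(1-a)*g)*be) with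
        (-((1-a)*g*be*be - (a+(1-b))*be + b*g)) by ring. lra. }
    split; auto.
    assert (0 <= (be*a - b*g)*(be*be-1)) by (apply Rmult_le_pos; nra).
    assert (hbY : 0 <= be * ((be*a - b*g)*be + ((1-b) - be*(1-a)*g))) by nra.
    destruct (Rle_or_lt 0 ((be*a - b*g)*be + ((1-b) - be*(1-a)*g))); auto.
    assert (be * ((be*a - b*g)*be + ((1-b) - be*(1-a)*g)) < 0) by (apply Rmult_pos_neg; lra). lra.
Qed.

Theorem lemma9 (a b : R) (ha0 : 0 <= a) (ha1 : a < 1) (hb0 : 0 <= b) (hb1 : b < 1)
  (hab : a + b > 1) :
  (exists be, (L1 a b be \/ L2 a b be \/ L3 a b be) /\
              (L4 a b be \/ L5 a b be \/ L6 a b be) /\ L0 a b be) ->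
  exists be, 1 <= be /\
    be <= Rmin (a / ((1 - a) * gam a b)) (b * gam a b / (1 - b)) /\
    forall n : nat, (1 <= n)%nat -> good a b be (n - 1) -> good a b be n.
Proof.
  intros [be [hc [hd [h0 h0']]]].
  exists be. split; [auto|split;[auto|]].
  assert (ha : 0 < a) by lra. assert (hb : 0 < b) by lra.
  set (g := gam a b).
  assert (hg : 0 < g) by apply gam_pos.
  destruct (keyc a b be g ha hb ha1 hb1 eq_refl h0 hc) as [Xc Yc].
  destruct (keyd a b be g ha hb ha1 hb1 eq_refl h0 hd) as [Xd Yd].
  assert (hK : 0 < Kc a b).
  { unfold Kc. apply Rdiv_lt_0_compat; [lra|]. fold g. apply Rmult_lt_0_compat; lra. }
  intros n hn hgood u hu.
  destruct u as [|x u']; [simpl in hu; lia|].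
  simpl in hu.
  destruct (hgood u' ltac:(lia)) as [g1 g2].
  unfold P0, P1 in *. simpl. fold g.
  set (p0 := fst (P01 a b u')) in *. set (p1 := snd (P01 a b u')) in *.
  set (K := Kc a b) in *.
  assert (cc : forall q0 q1, be*q1 >= q0 -> be*q0 >= q1 ->
     0 <= (be*b*g - a)*q0 + ((1-a)*g - be*(1-b))*q1).
  { intros q0 q1 e1 e2. apply (cone _ _ be); auto. intros ->. lra. }
  assert (dd : forall q0 q1, be*q1 >= q0 -> be*q0 >= q1 ->
     0 <= (be*a - b*g)*q0 + ((1-b) - be*(1-a)*g)*q1).
  { intros q0 q1 e1 e2. apply (cone _ _ be); auto. intros ->. lra. }
  destruct x.
  - pose proof (cc p1 p0 g2 g1). pose proof (dd p1 p0 g2 g1).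
    assert (0 <= K * ((be*b*g - a)*p1 + ((1-a)*g - be*(1-b))*p0)) by (apply Rmult_le_pos; lra).
    assert (0 <= K * ((be*a - b*g)*p1 + ((1-b) - be*(1-a)*g)*p0)) by (apply Rmult_le_pos; lra).
    cbn [fst snd]; split.
    + match goal with |- ?l >= ?r => assert (l - r = (K * ((be*b*g - a)*p1 + ((1-a)*g - be*(1-b))*p0))) by ring end. lra.
    + match goal with |- ?l >= ?r => assert (l - r = (K * ((be*a - b*g)*p1 + ((1-b) - be*(1-a)*g)*p0))) by ring end. lra.
  - pose proof (cc p0 p1 g1 g2). pose proof (dd p0 p1 g1 g2).
    assert (0 <= K * ((be*b*g - a)*p0 + ((1-a)*g - be*(1-b))*p1)) by (apply Rmult_le_pos; lra).
    assert (0 <= K * ((be*a - b*g)*p0 + ((1-b) - be*(1-a)*g)*p1)) by (apply Rmult_le_pos; lra).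
    cbn [fst snd]; split.
    + match goal with |- ?l >= ?r => assert (l - r = (K * ((be*a - b*g)*p0 + ((1-b) - be*(1-a)*g)*p1))) by ring end. lra.
    + match goal with |- ?l >= ?r => assert (l - r = (K * ((be*b*g - a)*p0 + ((1-a)*g - be*(1-b))*p1))) by ring end. lra.
Qed.
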